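(* Let $0<\omega_-<\omega_+$ and set $\boldsymbol\omega=(\omega_-,\omega_+)$. (i) If $\omega_+\neq 3\omega_-$, then for every $(\boldsymbol\alpha,\boldsymbol\beta)\in\mathbb N^2\times\mathbb N^2$ with $|\boldsymbol\alpha+\boldsymbol\beta|=4$ and $\boldsymbol\alpha\neq\boldsymbol\beta$, $$|\boldsymbol\omega\cdot(\boldsymbol\alpha-\boldsymbol\beta)|\geq \gamma:=\min\{\omega_-,\ \omega_+-\omega_-,\ |3\omega_--\omega_+|\}>0.$$ (ii) If $\omega_+=3\omega_-$, then for every $(\boldsymbol\alpha,\boldsymbol\beta)\in\mathbb N^2\times\mathbb N^2$ with $|\boldsymbol\alpha+\boldsymbol\beta|=4$, $\boldsymbol\alpha\neq\boldsymbol\beta$ and $(\boldsymbol\alpha,\boldsymbol\beta)\notin\{((3,0),(0,1)),\ ((0,1),(3,0))\}$, $$|\boldsymbol\omega\cdot(\boldsymbol\alpha-\boldsymbol\beta)|\geq \gamma_{\rm res}:=\min\{\omega_-,\ \omega_+-\omega_-\}>0.$$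
   Context: For $\boldsymbol\alpha=(\alpha_1,\alpha_2),\boldsymbol\beta=(\beta_1,\beta_2)\in\mathbb N^2$ (with $\mathbb N$ including $0$), $|\boldsymbol\alpha+\boldsymbol\beta|:=\alpha_1+\alpha_2+\beta_1+\beta_2$, and $\boldsymbol\omega\cdot(\boldsymbol\alpha-\boldsymbol\beta)=\omega_-(\alpha_1-\beta_1)+\omega_+(\alpha_2-\beta_2)$. *)

(* Defs.v *)
From Stdlib Require Import Reals.
Open Scope R_scope.

(* multi-indices in N^2 are pairs of nat *)
Definition mlen (a : nat * nat) : nat := (fst a + snd a)%nat.

Definition wdot (wm wp : R) (a b : nat * nat) : R :=
  wm * (INR (fst a) - INR (fst b)) + wp * (INR (snd a) - INR (snd b)).

(* Main.v *)
Require Import Defs.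
From Stdlib Require Import Reals Lra Lia.
Open Scope R_scope.

Ltac enum4 x := let h := fresh in
  assert (h : (x <= 4)%nat) by lia;
  destruct x as [|[|[|[|[|?]]]]]; try lia; clear h.

Lemma absfacts (M x y : R) : M <= x -> M <= y -> M <= Rabs x /\ M <= Rabs y.
Proof. intros; split; unfold Rabs; destruct Rcase_abs; lra. Qed.

Theorem proposition4p1 (wm wp : R) (Hm : 0 < wm) (Hmp : wm < wp) :
  (wp <> 3 * wm ->
     0 < Rmin wm (Rmin (wp - wm) (Rabs (3 * wm - wp))) /\
     forall a b : nat * nat,
       (mlen a + mlen b)%nat = 4%nat -> a <> b ->
       Rmin wm (Rmin (wp - wm) (Rabs (3 * wm - wp))) <= Rabs (wdot wm wp a b)) /\
  (wp = 3 * wm ->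
     0 < Rmin wm (wp - wm) /\
     forall a b : nat * nat,
       (mlen a + mlen b)%nat = 4%nat -> a <> b ->
       (a, b) <> ((3%nat, 0%nat), (0%nat, 1%nat)) ->
       (a, b) <> ((0%nat, 1%nat), (3%nat, 0%nat)) ->
       Rmin wm (wp - wm) <= Rabs (wdot wm wp a b)).
Proof.
  split.
  - intros Hne.
    set (M := Rmin wm (Rmin (wp - wm) (Rabs (3 * wm - wp)))).
    assert (H1 : M <= wm) by apply Rmin_l.
    assert (H2 : M <= wp - wm) by (eapply Rle_trans; [apply Rmin_r|apply Rmin_l]).
    assert (H3 : M <= Rabs (3*wm - wp)) by (eapply Rle_trans; [apply Rmin_r|apply Rmin_r]).
    assert (Ha : 0 < Rabs (3*wm - wp)) by (apply Rabs_pos_lt; lra).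
    split.
    { unfold M; repeat apply Rmin_glb_lt; lra. }
    intros [a1 a2] [b1 b2] H Hab; unfold mlen, wdot in *; simpl in *.
    enum4 a1; enum4 a2; enum4 b1; enum4 b2;
    try (exfalso; congruence);
    simpl INR; revert H1 H2 H3; unfold Rabs; 
    repeat destruct Rcase_abs; intros; lra.
  - intros Heq; subst wp.
    set (M := Rmin wm (3*wm - wm)).
    assert (H1 : M <= wm) by apply Rmin_l.
    assert (H2 : M <= 3*wm - wm) by apply Rmin_r.
    split.
    { unfold M; repeat apply Rmin_glb_lt; lra. }
    intros [a1 a2] [b1 b2] H Hab Hx Hy; unfold mlen, wdot in *; simpl in *.
    enum4 a1; enum4 a2; enum4 b1; enum4 b2;
    try (exfalso; congruence);
    simpl INR; revert H1 H2; unfold Rabs;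
    repeat destruct Rcase_abs; intros; lra.
Qed.
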